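(* Let $F=\{f_i\}_{i=1}^N$ be a uniform tight frame for an $n$-dimensional Hilbert space $\mathcal{H}_n$ such that $|\langle f_i,f_j\rangle|$ is the same constant for all $i\ne j$, and let $p>1$. Then every element of $\zeta_{\mathfrak{F}}^{(1),p}(F)$ is a $1$-uniform dual of $F$.
   Context: A frame $F$ is tight if $\sum_i|\langle f,f_i\rangle|^2=A\|f\|^2$ for all $f$ and some $A>0$; uniform tight if in addition all $\|f_i\|$ are equal. $G=\{g_i\}_{i=1}^N$ is a dual of $F$ if $f=\sum_i\langle f,f_i\rangle g_i$ for all $f\in\mathcal{H}_n$. A dual $G$ is $1$-uniform if $\langle f_i,g_i\rangle$ is the same constant for all $i$. For a dual $G$, $\mathrm{AE}_{\mathfrak{F}}^{(1),p}(F,G)=\{\frac1N\sum_{i=1}^N(\|f_i\|\,\|g_i\|)^p\}^{1/p}$ (the $\ell^p$-average over single erasures of the Frobenius norm of the error operator $f\mapsto\langle f,f_i\rangle g_i$), and $\zeta_{\mathfrak{F}}^{(1),p}(F)$ is the set of duals of $F$ minimizing this quantity over all duals. *)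

(* Defs.v *)
From HB Require Import structures.
From mathcomp Require Import all_boot all_order all_algebra.
From mathcomp Require Import reals exp.
From mathcomp.real_closed Require Import complex.
Set Implicit Arguments. Unset Strict Implicit. Unset Printing Implicit Defensive.
Import Order.TTheory GRing.Theory Num.Theory.
Local Open Scope ring_scope.

(* The n-dimensional (complex) Hilbert space H_n is modelled as C^n with
   C = R[i], R : realType; vectors are functions 'I_n -> R[i]. *)
Definition vec (R : realType) (n : nat) := 'I_n -> R[i].

Definition ip (R : realType) (n : nat) (f g : vec R n) : R[i] :=
  \sum_(k < n) f k * conjc (g k).

Definition cabs (R : realType) (z : R[i]) : R := Normc.normc z.

Definition vnorm (R : realType) (n : nat) (f : vec R n) : R :=
  Num.sqrt (\sum_(k < n) cabs (f k) ^+ 2).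

Definition tight_frame (R : realType) (n N : nat) (F : 'I_N -> vec R n) : Prop :=
  exists A : R, 0 < A /\
    forall f : vec R n, \sum_(i < N) cabs (ip f (F i)) ^+ 2 = A * vnorm f ^+ 2.

Definition uniform_tight_frame (R : realType) (n N : nat) (F : 'I_N -> vec R n) : Prop :=
  tight_frame F /\ forall i j : 'I_N, vnorm (F i) = vnorm (F j).

Definition equiangular (R : realType) (n N : nat) (F : 'I_N -> vec R n) : Prop :=
  exists c : R, forall i j : 'I_N, i != j -> cabs (ip (F i) (F j)) = c.

Definition is_dual (R : realType) (n N : nat) (F G : 'I_N -> vec R n) : Prop :=
  forall f : vec R n, forall k : 'I_n, f k = \sum_(i < N) ip f (F i) * G i k.

Definition one_uniform_dual (R : realType) (n N : nat) (F G : 'I_N -> vec R n) : Prop :=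
  is_dual F G /\ exists c : R[i], forall i : 'I_N, ip (F i) (G i) = c.

Definition AE1p (R : realType) (n N : nat) (p : R) (F G : 'I_N -> vec R n) : R :=
  powR (N%:R^-1 * \sum_(i < N) powR (vnorm (F i) * vnorm (G i)) p) p^-1.

(* G belongs to zeta_F^{(1),p}(F): a dual of F minimizing AE1p over all duals *)
Definition optimal_dual_1p (R : realType) (n N : nat) (p : R) (F G : 'I_N -> vec R n) : Prop :=
  is_dual F G /\ forall H : 'I_N -> vec R n, is_dual F H -> AE1p p F G <= AE1p p F H.

(* Main.v *)
Require Import Defs.
From HB Require Import structures.
From mathcomp Require Import all_boot all_order all_algebra.
From mathcomp Require Import reals exp.
From mathcomp.real_closed Require Import complex.
From mathcomp Require Import ring lra.
Import Order.TTheory GRing.Theory Num.Theory.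
Local Open Scope ring_scope.
Local Open Scope complex_scope.
Section S.
Context {R : realType}.
Implicit Types z w : R[i].
Lemma cabsE z : `|z| = (cabs z)%:C.
Proof. reflexivity. Qed.
Lemma cabs_ge0 z : 0 <= cabs z.
Proof. by case: z => a b; rewrite /cabs /= sqrtr_ge0. Qed.
Lemma cabs2 z : ((cabs z) ^+ 2)%:C = z * conjc z.
Proof.
case: z => a b; rewrite /cabs /= sqr_sqrtr ?addr_ge0 ?sqr_ge0 //.
simpc; rewrite /real_complex_def; congr (_ +i* _); ring.
Qed.
Lemma cabs_conj z : cabs (conjc z) = cabs z.
Proof. by case: z => a b; rewrite /cabs /= sqrrN. Qed.
Lemma cabsM z w : cabs (z * w) = cabs z * cabs w.
Proof. exact: Normc.normcM. Qed.
Lemma cabs_sum I (r : seq I) (P : pred I) (f : I -> R[i]) :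
  cabs (\sum_(i <- r | P i) f i) <= \sum_(i <- r | P i) cabs (f i).
Proof.
rewrite -lecR -cabsE rmorph_sum /=.
apply: le_trans (ler_norm_sum _ _ _) _.
by [].

Qed.
Lemma cabs_real (x : R) : cabs x%:C = `|x|.
Proof. by rewrite /cabs /= expr0n /= addr0 sqrtr_sqr. Qed.

Lemma Re_le_cabs z : complex.Re z <= cabs z.
Proof.
case: z => a b; rewrite /cabs /=.
apply: le_trans (ler_norm a) _.
rewrite -sqrtr_sqr ler_sqrt ?lerDl ?sqr_ge0 //.
by rewrite addr_ge0 ?sqr_ge0.
Qed.
Lemma cabs2_Re_Im z : cabs z ^+ 2 = complex.Re z ^+ 2 + complex.Im z ^+ 2.
Proof. by case: z => a b; rewrite /cabs /= sqr_sqrtr ?addr_ge0 ?sqr_ge0. Qed.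
Lemma real_CS n (x y : 'I_n -> R) :
  \sum_k x k * y k <= Num.sqrt (\sum_k x k ^+ 2) * Num.sqrt (\sum_k y k ^+ 2).
Proof.
set Sx := \sum_k x k ^+ 2; set Sy := \sum_k y k ^+ 2.
have Sx0 : 0 <= Sx by apply: sumr_ge0 => k _; exact: sqr_ge0.
have Sy0 : 0 <= Sy by apply: sumr_ge0 => k _; exact: sqr_ge0.
set X := Num.sqrt Sx; set Y := Num.sqrt Sy.
have X0 : 0 <= X by exact: sqrtr_ge0.
have Y0 : 0 <= Y by exact: sqrtr_ge0.
have XX : X ^+ 2 = Sx by rewrite sqr_sqrtr.
have YY : Y ^+ 2 = Sy by rewrite sqr_sqrtr.
have [XY0|XYpos] := eqVneq (X * Y) 0.
  move/eqP: XY0; rewrite mulf_eq0 => /orP[] /eqP H.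
    have: Sx = 0 by rewrite -XX H expr0n.
    move/eqP; rewrite psumr_eq0 => [/allP Hx|k _]; last exact: sqr_ge0.
    rewrite big1 ?mulr_ge0 // => k _.
    have := Hx k (mem_index_enum _); rewrite /= sqrf_eq0 => /eqP ->.
    by rewrite mul0r.
  have: Sy = 0 by rewrite -YY H expr0n.
  move/eqP; rewrite psumr_eq0 => [/allP Hy|k _]; last exact: sqr_ge0.
  rewrite big1 ?mulr_ge0 // => k _.
  have := Hy k (mem_index_enum _); rewrite /= sqrf_eq0 => /eqP ->.
  by rewrite mulr0.
have XYgt0 : 0 < X * Y by rewrite lt_neqAle eq_sym XYpos mulr_ge0.
have key : (\sum_k x k * y k) * (X * Y) *+ 2 <= (X * Y) ^+ 2 *+ 2.
  have -> : (X * Y) ^+ 2 *+ 2 = \sum_k (x k ^+ 2 * Y ^+ 2 + y k ^+ 2 * X ^+ 2).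
    rewrite big_split /= -!mulr_suml -/Sx -/Sy -XX -YY; ring.
  rewrite mulr_suml -sumrMnl; apply: ler_sum => k _.
  rewrite -subr_ge0.
  set L := (_ - _); have -> : L = (x k * Y - y k * X) ^+ 2 by rewrite /L; ring.
  exact: sqr_ge0.
rewrite lerMn2r /= in key.
by rewrite -(ler_pM2r XYgt0) -expr2.
Qed.
Section V.
Variable n : nat.
Implicit Types f g h : vec R n.
Lemma vnorm_ge0 f : 0 <= vnorm f.
Proof. exact: sqrtr_ge0. Qed.
Lemma vnorm_sq f : vnorm f ^+ 2 = \sum_k cabs (f k) ^+ 2.
Proof. by rewrite sqr_sqrtr // sumr_ge0 // => k _; exact: sqr_ge0. Qed.
Lemma vnorm_sqC f : (vnorm f ^+ 2)%:C = ip f f.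
Proof. rewrite vnorm_sq rmorph_sum; apply: eq_bigr => k _; exact: cabs2. Qed.
Lemma ip_conj f g : conjc (ip f g) = ip g f.
Proof.
rewrite /ip rmorph_sum; apply: eq_bigr => k _.
by rewrite rmorphM /= conjcK mulrC.
Qed.
Lemma CS f g : cabs (ip f g) <= vnorm f * vnorm g.
Proof.
rewrite /ip; apply: (le_trans (cabs_sum _ _ _ _)).
under eq_bigr do rewrite cabsM cabs_conj.
exact: real_CS.
Qed.
Lemma vnorm_scale (r : R) f : 0 <= r -> vnorm (fun k => r%:C * f k) = r * vnorm f.
Proof.
move=> r0; rewrite /vnorm.
under eq_bigr do rewrite cabsM cabs_real ger0_norm // exprMn.
by rewrite -mulr_sumr sqrtrM ?sqr_ge0 // sqrtr_sqr ger0_norm.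
Qed.
Definition ev (l : 'I_n) : vec R n := fun k => (k == l)%:R.
Lemma ip_ev l f : ip (ev l) f = conjc (f l).
Proof.
rewrite /ip (bigD1 l) //= /ev eqxx mul1r big1 ?addr0 // => k /negbTE ->.
by rewrite mul0r.
Qed.
Lemma ip_evr l f : ip f (ev l) = f l.
Proof.
rewrite /ip (bigD1 l) //= /ev eqxx rmorph1 mulr1 big1 ?addr0 // => k /negbTE ->.
by rewrite rmorph0 mulr0.
Qed.
Lemma ip_lin f g (t : R[i]) h :
  ip (fun k => f k + t * g k) h = ip f h + t * ip g h.
Proof.
rewrite /ip mulr_sumr.
transitivity (\sum_k (f k * conjc (h k) + t * (g k * conjc (h k)))).
  by apply: eq_bigr => k _; ring.
by rewrite big_split.
Qed.
Lemma ip_linr f g (t : R[i]) h :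
  ip h (fun k => f k + t * g k) = ip h f + conjc t * ip h g.
Proof.
rewrite /ip mulr_sumr.
transitivity (\sum_k (h k * conjc (f k) + conjc t * (h k * conjc (g k)))).
  by apply: eq_bigr => k _; rewrite rmorphD rmorphM /=; ring.
by rewrite big_split.
Qed.
End V.
Lemma conj_i : conjc 'i = - 'i :> R[i].
Proof. by apply/eqP; rewrite eq_complex /= oppr0 !eqxx. Qed.
Lemma ii : 'i * 'i = -1 :> R[i].
Proof. by rewrite -expr2 sqr_i. Qed.

Arguments ev {n}.
Section Frame.
Variables (n N : nat) (F : 'I_N -> vec R n) (A : R).
Hypothesis tight : forall f : vec R n,
  \sum_(i < N) cabs (ip f (F i)) ^+ 2 = A * vnorm f ^+ 2.

Lemma Q0 (f : vec R n) :
  \sum_(i < N) ip f (F i) * conjc (ip f (F i)) = A%:C * ip f f.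
Proof.
have := congr1 (real_complex R) (tight f).
rewrite rmorph_sum rmorphM /= vnorm_sqC => <-.
by apply: eq_bigr => i _; rewrite cabs2.
Qed.

Definition Bf (u v : vec R n) :=
  \sum_(i < N) ip u (F i) * conjc (ip v (F i)) - A%:C * ip u v.

Lemma polar u v t : conjc t * Bf u v + t * Bf v u = 0.
Proof.
have Hw := Q0 (fun k => u k + t * v k).
have Hu := Q0 u. have Hv := Q0 v.
set S1 := \sum_(i < N) ip u (F i) * conjc (ip u (F i)) in Hu.
set S4 := \sum_(i < N) ip v (F i) * conjc (ip v (F i)) in Hv.
set S2 := \sum_(i < N) ip u (F i) * conjc (ip v (F i)).
set S3 := \sum_(i < N) ip v (F i) * conjc (ip u (F i)).
have E : \sum_(i < N) ip (fun k => u k + t * v k) (F i) *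
             conjc (ip (fun k => u k + t * v k) (F i)) =
         S1 + conjc t * S2 + t * S3 + t * conjc t * S4.
  transitivity (\sum_(i < N) (ip u (F i) * conjc (ip u (F i)) +
     conjc t * (ip u (F i) * conjc (ip v (F i))) +
     t * (ip v (F i) * conjc (ip u (F i))) +
     t * conjc t * (ip v (F i) * conjc (ip v (F i))))).
    by apply: eq_bigr => i _; rewrite ip_lin rmorphD rmorphM /=; ring.
  by rewrite !big_split /= -!mulr_sumr.
rewrite E ip_lin !ip_linr in Hw.
rewrite /Bf -/S2 -/S3.
transitivity ((S1 + conjc t * S2 + t * S3 + t * conjc t * S4 -
   A%:C * (ip u u + conjc t * ip u v + t * (ip v u + conjc t * ip v v)))
   - (S1 - A%:C * ip u u) - t * conjc t * (S4 - A%:C * ip v v)).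
  ring.
by rewrite Hw Hu Hv !subrr mulr0 !subr0.
Qed.

Lemma Bf0 u v : Bf u v = 0.
Proof.
have h1 := polar u v 1. have h2 := polar u v 'i.
rewrite rmorph1 !mul1r in h1. rewrite conj_i in h2.
have : Bf u v *+ 2 = (Bf u v + Bf v u) + 'i * (- 'i * Bf u v + 'i * Bf v u)
   + (1 + 'i * 'i) * (Bf u v - Bf v u) by ring.
rewrite h1 h2 ii subrr mulr0 mul0r !addr0 => /eqP.
by rewrite mulrn_eq0 /= => /eqP.
Qed.

Lemma frame_id (f : vec R n) (l : 'I_n) :
  \sum_(i < N) ip f (F i) * F i l = A%:C * f l.
Proof.
have := Bf0 f (ev l); rewrite /Bf ip_evr => /eqP; rewrite subr_eq0 => /eqP <-.
by apply: eq_bigr => i _; rewrite ip_ev conjcK.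
Qed.
End Frame.
Lemma frame_norm n N (F : 'I_N -> vec R n) A :
  (forall f : vec R n, \sum_(i < N) cabs (ip f (F i)) ^+ 2 = A * vnorm f ^+ 2) ->
  \sum_(i < N) vnorm (F i) ^+ 2 = n%:R * A.
Proof.
move=> tight; apply: (@complexI R).
rewrite rmorph_sum rmorphM /=.
under eq_bigr do rewrite vnorm_sqC.
rewrite /ip exchange_big /=.
transitivity (\sum_(l < n) A%:C).
  apply: eq_bigr => l _.
  rewrite -[A%:C]mulr1 -[1 in RHS](_ : ev l l = 1); last by rewrite /ev eqxx.
  rewrite -(@frame_id n N F A tight (ev l) l); apply: eq_bigr => i _; rewrite ip_ev mulrC //.
rewrite sumr_const card_ord -rmorphMn -rmorphM /=; congr (_%:C); by rewrite mulr_natl.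
Qed.

Lemma trace_dual n N (F G : 'I_N -> vec R n) :
  is_dual F G -> \sum_(i < N) ip (G i) (F i) = n%:R.
Proof.
move=> dual; rewrite /ip exchange_big /=.
transitivity (\sum_(l < n) (1 : R[i])); last by rewrite sumr_const card_ord.
apply: eq_bigr => l _.
rewrite -[1 in RHS](_ : ev l l = 1); last by rewrite /ev eqxx.
rewrite (dual (ev l) l); apply: eq_bigr => i _; rewrite ip_ev mulrC //.
Qed.
Lemma tangent1 (p t : R) : 1 < p -> 0 <= t -> 1 + p * (t - 1) <= t `^ p.
Proof.
move=> p1 t0.
have p0 : 0 < p by apply: lt_trans p1.
have pm1 : 0 < p - 1 by rewrite subr_gt0.
pose q := p / (p - 1).
have q0 : 0 < q by rewrite divr_gt0.
have pq : p^-1 + q^-1 = 1.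
  rewrite /q invf_div; field; exact: lt0r_neq0.
have := conjugate_powR t0 ler01 p0 q0 pq.
have e : t `^ p / p + 1 `^ q / q = (t `^ p + (p - 1)) / p.
  rewrite powR1 /q; field; rewrite ?lt0r_neq0 //.
rewrite mulr1 e ler_pdivlMr // => H; lra.
Qed.

Lemma tangent_strict (p t : R) : 1 < p -> 0 <= t -> t != 1 ->
  1 + p * (t - 1) < t `^ p.
Proof.
move=> p1 t0 t1.
have p0 : 0 < p by apply: lt_trans p1.
have pm1 : 0 < p - 1 by rewrite subr_gt0.
pose m := (t + 1) / 2.
have m0 : 0 < m by rewrite /m divr_gt0 //; lra.
pose s := t / m.
have s0 : 0 <= s by rewrite /s divr_ge0 // ltW.
have ht : t = m * s by rewrite /s mulrC divfK ?lt0r_neq0.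
pose X := m `^ (p - 1).
have hM : m `^ p = m * X by rewrite /X mulr_powRB1 // ltW.
have hP : t `^ p = m `^ p * s `^ p by rewrite {1}ht powRM // ltW.
have Ts := @tangent1 p s p1 s0.
have Tm := @tangent1 p m p1 (ltW m0).
have M0 : 0 <= m `^ p by exact: powR_ge0.
have h1 := ler_wpM2l M0 Ts.
have e1 : m `^ p * (1 + p * (s - 1)) = m `^ p + p * X * t - p * X * m.
  by rewrite hM ht; ring.
have hP2 : 1 + p * (m - 1) + p * X * t - p * X * m <= t `^ p.
  rewrite hP; apply: le_trans h1; rewrite e1; lra.
apply: lt_le_trans hP2.
rewrite -subr_gt0.
have -> : 1 + p * (m - 1) + p * X * t - p * X * m - (1 + p * (t - 1)) =
   p * ((t - m) * (X - 1)) by ring.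
apply: mulr_gt0 => //.
have [tlt1|tgt1|teq1] := ltgtP t 1.
- have mlt1 : m < 1 by rewrite /m; lra.
  have tm : t < m by rewrite /m; lra.
  have : X < 1 `^ (p - 1).
    by apply: gt0_ltr_powR => //; rewrite nnegrE ?ltW // ler01.
  rewrite powR1.
  move=> X1; rewrite nmulr_rgt0; lra.
- have mgt1 : 1 < m by rewrite /m; lra.
  have tm : m < t by rewrite /m; lra.
  have : 1 `^ (p - 1) < X.
    by apply: gt0_ltr_powR => //; rewrite nnegrE ?ltW // ler01.
  rewrite powR1.
  move=> X1; apply: mulr_gt0; lra.
- by rewrite teq1 eqxx in t1.
Qed.
Lemma pow_eq N (a : 'I_N -> R) (c p : R) : 1 < p -> 0 < c ->
  (forall i, 0 <= a i) ->
  \sum_(i < N) a i `^ p <= N%:R * c `^ p ->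
  N%:R * c <= \sum_(i < N) a i ->
  forall i, a i = c.
Proof.
move=> p1 c0 a0 Hp Hs.
have cp0 : 0 < c `^ p by exact: powR_gt0.
pose t i := a i / c.
have t0 i : 0 <= t i by rewrite /t divr_ge0 // ltW.
have ha i : a i = c * t i by rewrite /t mulrC divfK ?lt0r_neq0.
pose D i := t i `^ p - (1 + p * (t i - 1)).
have D0 i : 0 <= D i by rewrite /D subr_ge0; exact: tangent1.
have S1 : \sum_(i < N) t i `^ p <= N%:R.
  have : \sum_(i < N) a i `^ p = c `^ p * \sum_(i < N) t i `^ p.
    rewrite mulr_sumr; apply: eq_bigr => i _; rewrite ha powRM ?(ltW c0) ?t0 //.
  move=> e; rewrite e in Hp.
  by rewrite -(ler_pM2l cp0) [_ * N%:R]mulrC.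
have S2 : N%:R <= \sum_(i < N) t i.
  have : \sum_(i < N) a i = c * \sum_(i < N) t i.
    rewrite mulr_sumr; apply: eq_bigr => i _; exact: ha.
  move=> e; rewrite e mulrC in Hs.
  by rewrite -(ler_pM2l c0).
have S3 : \sum_(i < N) (1 + p * (t i - 1)) = N%:R + p * (\sum_(i < N) t i - N%:R).
  rewrite big_split /= sumr_const card_ord -mulr_sumr sumrB sumr_const card_ord.
  by rewrite -[1 *+ N]/(N%:R).
have SD : \sum_(i < N) D i = 0.
  apply/eqP; rewrite eq_le; apply/andP; split; last by apply: sumr_ge0 => i _.
  rewrite /D sumrB S3.
  have p0 : 0 < p by apply: lt_trans p1.
  have : 0 <= p * (\sum_(i < N) t i - N%:R) by apply: mulr_ge0; [exact: ltW | rewrite subr_ge0].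
  lra.
move=> i.
have Di : D i = 0 by apply: (psumr_eq0P (fun j _ => D0 j) SD).
have ti : t i = 1.
  apply/eqP; apply: contraT => /(@tangent_strict p (t i) p1 (t0 i)).
  by rewrite -subr_gt0 -/(D i) Di ltxx.
by rewrite ha ti mulr1.
Qed.
Lemma Re_sum N (z : 'I_N -> R[i]) :
  complex.Re (\sum_(i < N) z i) = \sum_(i < N) complex.Re (z i).
Proof.
apply: (big_morph (@complex.Re R)) => //.
by move=> [a b] [c d].
Qed.

Lemma avg_eq N (z : 'I_N -> R[i]) (c : R) : (forall i, cabs (z i) <= c) ->
  \sum_(i < N) z i = (N%:R * c)%:C -> forall i, z i = c%:C.
Proof.
move=> zc zs.
have Rec i : complex.Re (z i) <= c by apply: le_trans (Re_le_cabs _) (zc i).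
have S0 : \sum_(i < N) (c - complex.Re (z i)) = 0.
  rewrite sumrB -Re_sum zs sumr_const card_ord /= -mulr_natl; ring.
move=> i.
have Ri : complex.Re (z i) = c.
  have Rge j : 0 <= c - complex.Re (z j) by rewrite subr_ge0.
  have := @psumr_eq0P _ _ _ _ (fun j _ => Rge j) S0 i isT.
  by move/eqP; rewrite subr_eq0 => /eqP.
have c2 := cabs2_Re_Im (z i).
have ca := cabs_ge0 (z i).
have zci := zc i.
have Ii : complex.Im (z i) ^+ 2 <= 0.
  rewrite Ri in c2. nra.
have : complex.Im (z i) = 0.
  by apply/eqP; rewrite -sqrf_eq0 eq_le Ii sqr_ge0.
move: Ri; case: (z i) => a b /= -> ->; reflexivity.
Qed.
End S.

Theorem corollary3p5 (R : realType) (n N : nat) (F : 'I_N -> vec R n) (p : R) :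
  uniform_tight_frame F -> equiangular F -> 1 < p ->
  forall G : 'I_N -> vec R n, optimal_dual_1p p F G -> one_uniform_dual F G.
Proof.
move=> [[A [A0 tight]] unif] _ p1 G [dual opt].
split => //.
case: n F G tight unif dual opt => [|n] F G tight unif dual opt.
  by exists 0 => i; rewrite /ip big_ord0.
have tr := trace_dual _ _ _ _ dual.
have N0 : (0 < N)%N.
  case: N F G tight unif dual opt tr => // F G _ _ _ _.
  by rewrite big_ord0 => /eqP; rewrite eq_sym pnatr_eq0.
have p0 : 0 < p by apply: lt_trans p1.
have NR0 : 0 < (N%:R : R) by rewrite ltr0n.
pose i0 : 'I_N := Ordinal N0.
pose nu := vnorm (F i0).
have hnu i : vnorm (F i) = nu by rewrite /nu (unif i i0).
have fn0 := frame_norm _ _ _ _ tight.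
have fn : N%:R * nu ^+ 2 = n.+1%:R * A.
  rewrite -fn0 (eq_bigr (fun _ => nu ^+ 2)); last by move=> i _; rewrite hnu.
  by rewrite sumr_const card_ord mulr_natl.
pose c := n.+1%:R / (N%:R : R).
have c0 : 0 < c by rewrite /c divr_gt0 // ltr0n.
pose H i := fun k => (A^-1)%:C * F i k.
have dualH : is_dual F H.
  move=> f k; rewrite /H.
  under eq_bigr do rewrite mulrCA.
  rewrite -mulr_sumr (@frame_id R n.+1 N F A tight f k) mulrA -rmorphM /=.
  by rewrite mulVf ?lt0r_neq0 // mul1r.
have nH i : vnorm (H i) = A^-1 * nu.
  by rewrite /H vnorm_scale ?invr_ge0 ?ltW // hnu.
have hc : nu * (A^-1 * nu) = c.
  rewrite /c mulrCA -expr2; apply: (mulfI (lt0r_neq0 NR0)).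
  rewrite mulrCA fn; field; rewrite ?lt0r_neq0 //.
have SH : \sum_(i < N) (vnorm (F i) * vnorm (H i)) `^ p = N%:R * c `^ p.
  rewrite (eq_bigr (fun _ => c `^ p)); last by move=> i _; rewrite nH hnu hc.
  by rewrite sumr_const card_ord mulr_natl.
have := opt H dualH; rewrite /AE1p SH => HA.
pose a i := vnorm (F i) * vnorm (G i).
have a0 i : 0 <= a i by rewrite /a mulr_ge0 ?vnorm_ge0.
have Sp : \sum_(i < N) a i `^ p <= N%:R * c `^ p.
  rewrite leNgt; apply/negP => Hlt.
  move: HA; apply/negP; rewrite -ltNge.
  apply: gt0_ltr_powR; rewrite ?invr_gt0 // ?nnegrE.
  - by rewrite !mulr_ge0 ?invr_ge0 ?ler0n // powR_ge0.
  - by rewrite mulr_ge0 ?invr_ge0 ?ler0n // sumr_ge0 // => i _; rewrite powR_ge0.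
  - by rewrite ltr_pM2l ?invr_gt0.
have Nc : N%:R * c = n.+1%:R by rewrite /c mulrC divfK ?lt0r_neq0.
have Ss : N%:R * c <= \sum_(i < N) a i.
  rewrite Nc.
  have : cabs (n.+1%:R : R[i]) = n.+1%:R.
    by rewrite -(rmorph_nat (real_complex R)) cabs_real ger0_norm ?ler0n.
  move=> <-; rewrite -tr.
  apply: (le_trans (cabs_sum _ _ _ _)); apply: ler_sum => i _.
  by rewrite /a mulrC; exact: CS.
have ac := pow_eq _ _ _ _ p1 c0 a0 Sp Ss.
have zc : forall i, cabs (ip (G i) (F i)) <= c.
  by move=> i; rewrite -(ac i) /a mulrC; exact: CS.
have zs : \sum_(i < N) ip (G i) (F i) = (N%:R * c)%:C.
  by rewrite tr Nc rmorph_nat.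
have := avg_eq _ _ _ zc zs.
move=> Hz; exists c%:C => i.
by rewrite -ip_conj Hz conjc_real.
Qed.
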